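(* Let $p\geq1$ and let $(E,d)$ be a separable, locally compact geodesic space. For every $J\in\mathbb{N}^*$ and nonnegative weights $(\lambda_j)_{1\leq j\leq J}$ with $\sum_j\lambda_j=1$, there exists a Borel map $T:E^J\to E$ such that for every $(x_1,\dots,x_J)\in E^J$, $T(x_1,\dots,x_J)$ is a minimizer of $x\mapsto\sum_{j=1}^J\lambda_j d^p(x,x_j)$ over $E$.
   Context: A geodesic space is a complete metric space $(E,d)$ in which every two points $x,y$ have a mid-point, i.e. a point $z$ with $d(x,z)=d(z,y)=\tfrac12 d(x,y)$. *)

(* Defs.v *)
From Stdlib Require Import Reals Lra List.
From Stdlib Require Fin.
Open Scope R_scope.

Definition is_metric {E : Type} (d : E -> E -> R) : Prop :=
  (forall x y, 0 <= d x y) /\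
  (forall x y, d x y = 0 <-> x = y) /\
  (forall x y, d x y = d y x) /\
  (forall x y z, d x z <= d x y + d y z).

Definition cauchy {E : Type} (d : E -> E -> R) (u : nat -> E) : Prop :=
  forall eps, 0 < eps -> exists N, forall m n, (N <= m)%nat -> (N <= n)%nat -> d (u m) (u n) < eps.

Definition converges_to {E : Type} (d : E -> E -> R) (u : nat -> E) (l : E) : Prop :=
  forall eps, 0 < eps -> exists N, forall n, (N <= n)%nat -> d (u n) l < eps.

Definition complete {E : Type} (d : E -> E -> R) : Prop :=
  forall u, cauchy d u -> exists l, converges_to d u l.

Definition geodesic {E : Type} (d : E -> E -> R) : Prop :=
  is_metric d /\ complete d /\
  forall x y, exists z, d x z = d x y / 2 /\ d z y = d x y / 2.

Definition is_open {E : Type} (d : E -> E -> R) (U : E -> Prop) : Prop :=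
  forall x, U x -> exists r, 0 < r /\ forall y, d x y < r -> U y.

Definition compact {E : Type} (d : E -> E -> R) (K : E -> Prop) : Prop :=
  forall (I : Type) (U : I -> E -> Prop),
    (forall i, is_open d (U i)) ->
    (forall x, K x -> exists i, U i x) ->
    exists l : list I, forall x, K x -> exists i, In i l /\ U i x.

Definition locally_compact {E : Type} (d : E -> E -> R) : Prop :=
  forall x, exists K, compact d K /\
    exists r, 0 < r /\ forall y, d x y < r -> K y.

Definition separable {E : Type} (d : E -> E -> R) : Prop :=
  exists D : E -> Prop,
    (exists f : E -> nat, forall x y, D x -> D y -> f x = f y -> x = y) /\
    (forall x eps, 0 < eps -> exists y, D y /\ d x y < eps).

Definition is_open_prod {E : Type} (d : E -> E -> R) (J : nat)
    (U : (Fin.t J -> E) -> Prop) : Prop :=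
  forall x, U x -> exists r, 0 < r /\
    forall y, (forall j, d (x j) (y j) < r) -> U y.

Inductive borel {X : Type} (op : (X -> Prop) -> Prop) : (X -> Prop) -> Prop :=
| borel_open : forall U, op U -> borel op U
| borel_compl : forall A, borel op A -> borel op (fun x => ~ A x)
| borel_cunion : forall A : nat -> X -> Prop,
    (forall n, borel op (A n)) -> borel op (fun x => exists n, A n x)
| borel_ext : forall A B, borel op A -> (forall x, A x <-> B x) -> borel op B.

Definition borel_map {X Y : Type} (opX : (X -> Prop) -> Prop)
    (opY : (Y -> Prop) -> Prop) (f : X -> Y) : Prop :=
  forall B, borel opY B -> borel opX (fun x => B (f x)).

Fixpoint sumFin (n : nat) : (Fin.t n -> R) -> R :=
  match n return (Fin.t n -> R) -> R with
  | O => fun _ => 0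
  | S m => fun f => f Fin.F1 + sumFin m (fun i => f (Fin.FS i))
  end.

(* a^p for a >= 0 and real p >= 1 (0^p = 0) *)
Definition rpow (a p : R) : R :=
  match Rle_lt_dec a 0 with
  | left _ => 0
  | right _ => Rpower a p
  end.

Definition barycost {E : Type} (d : E -> E -> R) (p : R) (J : nat)
    (lam : Fin.t J -> R) (xs : Fin.t J -> E) (x : E) : R :=
  sumFin J (fun j => lam j * rpow (d x (xs j)) p).

(* Main.v *)
Require Import Defs.
From Stdlib Require Import Reals List.
From Stdlib Require Fin.
From Stdlib Require Import Lra Classical ClassicalEpsilon Lia ZArith.
Open Scope R_scope.

Lemma pow2_pos n : 0 < 2 ^ n.
Proof. apply pow_lt; lra. Qed.

Definition rr (n : nat) : R := / 2 ^ n.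

Lemma rr_pos n : 0 < rr n.
Proof. unfold rr; apply Rinv_0_lt_compat, pow2_pos. Qed.

Lemma rr_S n : rr (S n) = rr n / 2.
Proof. unfold rr; simpl. rewrite Rinv_mult. lra. Qed.

Lemma pow2_ge n : INR n <= 2 ^ n.
Proof.
  induction n. simpl; lra.
  rewrite S_INR; simpl.
  assert (1 <= 2 ^ n) by (clear IHn; induction n; simpl; lra). lra.
Qed.

Lemma rr_small eps : 0 < eps -> exists n, rr n < eps.
Proof.
  intros He. destruct (archimed (/ eps)) as [H1 _].
  exists (Z.to_nat (up (/ eps))).
  unfold rr.
  assert (Hup : 0 < IZR (up (/ eps))).
  { apply Rlt_trans with (/eps); auto. apply Rinv_0_lt_compat; auto. }
  assert (Hz : (0 < up (/eps))%Z) by (apply lt_IZR; auto).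
  assert (INR (Z.to_nat (up (/ eps))) = IZR (up (/eps))).
  { rewrite INR_IZR_INZ. rewrite Z2Nat.id; [reflexivity | lia]. }
  pose proof (pow2_ge (Z.to_nat (up (/ eps)))).
  pose proof (pow2_pos (Z.to_nat (up (/ eps)))).
  assert (Hlt : / eps < 2 ^ Z.to_nat (up (/ eps))) by lra.
  apply Rinv_lt_contravar in Hlt.
  rewrite Rinv_inv in Hlt; exact Hlt.
  apply Rmult_lt_0_compat; auto. apply Rinv_0_lt_compat; auto.
Qed.

Lemma rr_le_mono n m : (n <= m)%nat -> rr m <= rr n.
Proof.
  induction 1. lra. rewrite rr_S. pose proof (rr_pos m). lra.
Qed.

Lemma rpow_nonpos a p : a <= 0 -> rpow a p = 0.
Proof. intros H; unfold rpow; destruct (Rle_lt_dec a 0); auto; lra. Qed.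

Lemma rpow_pos_eq a p : 0 < a -> rpow a p = Rpower a p.
Proof. intros H; unfold rpow; destruct (Rle_lt_dec a 0); auto; lra. Qed.

Lemma rpow_ge0 a p : 0 <= rpow a p.
Proof.
  unfold rpow; destruct (Rle_lt_dec a 0). lra. unfold Rpower. left; apply exp_pos.
Qed.

Lemma rpow_le_self a p : 1 <= p -> 0 < a < 1 -> Rpower a p <= a.
Proof.
  intros Hp Ha. unfold Rpower.
  assert (ln a < 0).
  { rewrite <- ln_1. apply ln_increasing; lra. }
  rewrite <- (exp_ln a) at 2 by lra.
  destruct (Req_dec (p * ln a) (ln a)) as [E|E]. rewrite E; lra.
  left. apply exp_increasing. nra.
Qed.

Lemma rpow_ge_self a p : 1 <= p -> 1 <= a -> a <= rpow a p.
Proof.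
  intros Hp Ha. rewrite rpow_pos_eq by lra. unfold Rpower.
  assert (0 <= ln a).
  { rewrite <- ln_1. destruct (Req_dec a 1). subst; lra. left; apply ln_increasing; lra. }
  rewrite <- (exp_ln a) at 1 by lra.
  destruct (Req_dec (p * ln a) (ln a)) as [E|E]. rewrite E; lra.
  left. apply exp_increasing. nra.
Qed.

Lemma rpow_cont p : 1 <= p -> forall a, 0 <= a -> forall eps, 0 < eps ->
  exists delta, 0 < delta /\ forall b, 0 <= b -> Rabs (b - a) < delta ->
    Rabs (rpow b p - rpow a p) < eps.
Proof.
  intros Hp a Ha eps He.
  destruct (Req_dec a 0) as [Ea|Ea].
  - subst a. exists (Rmin 1 eps). split. apply Rmin_glb_lt; lra.
    intros b Hb Hba. rewrite (rpow_nonpos 0) by lra.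
    rewrite Rminus_0_r in *. rewrite Rabs_right in Hba by lra.
    pose proof (Rmin_l 1 eps); pose proof (Rmin_r 1 eps).
    destruct (Rle_lt_dec b 0).
    + rewrite rpow_nonpos by auto. rewrite Rabs_R0; lra.
    + rewrite rpow_pos_eq by auto.
      pose proof (rpow_le_self b p Hp ltac:(lra)).
      rewrite Rabs_right. lra. left; unfold Rpower; apply exp_pos.
  - assert (Hpos : 0 < a) by lra.
    assert (C : continuity_pt (fun x => Rpower x p) a).
    { apply derivable_continuous_pt. exists (p * Rpower a (p - 1)).
      apply derivable_pt_lim_power; auto. }
    destruct (C eps He) as [del [Hdel Hc]].
    exists (Rmin del (a/2)). split. apply Rmin_glb_lt; lra.
    intros b Hb Hba.
    pose proof (Rmin_l del (a/2)); pose proof (Rmin_r del (a/2)).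
    assert (0 < b).
    { apply Rabs_def2 in Hba. lra. }
    rewrite !rpow_pos_eq by auto.
    destruct (Req_dec a b) as [Eab|Eab].
    { subst b. rewrite Rminus_diag, Rabs_R0; lra. }
    apply (Hc b). split. split. exact I. exact Eab.
    simpl. unfold Rdist. lra.
Qed.

Lemma sumFin_nonneg n (f : Fin.t n -> R) : (forall i, 0 <= f i) -> 0 <= sumFin n f.
Proof.
  revert f; induction n; intros f Hf; simpl. lra.
  pose proof (Hf Fin.F1). pose proof (IHn (fun i => f (Fin.FS i)) (fun i => Hf _)). lra.
Qed.

Lemma sumFin_ge_term n (f : Fin.t n -> R) j : (forall i, 0 <= f i) -> f j <= sumFin n f.
Proof.
  induction j; intros Hf; simpl.
  - pose proof (sumFin_nonneg n (fun i => f (Fin.FS i)) (fun i => Hf _)). lra.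
  - pose proof (Hf Fin.F1). specialize (IHj (fun i => f (Fin.FS i)) (fun i => Hf _)). simpl in IHj. lra.
Qed.

Lemma sumFin_zero n (f : Fin.t n -> R) : (forall i, f i = 0) -> sumFin n f = 0.
Proof.
  revert f; induction n; intros f Hf; simpl. lra.
  rewrite Hf, (IHn (fun i => f (Fin.FS i)) (fun i => Hf _)). lra.
Qed.

Lemma sumFin_pos_exists n (f : Fin.t n -> R) : (forall i, 0 <= f i) -> sumFin n f = 1 ->
  exists j, 0 < f j.
Proof.
  intros Hf Hs. apply NNPP; intro Hn.
  assert (forall i, f i = 0).
  { intro i. destruct (Hf i); auto. exfalso; apply Hn; eauto. }
  rewrite sumFin_zero in Hs; auto. lra.
Qed.

Lemma sumFin_cont p : 1 <= p -> forall n (lam : Fin.t n -> R) (a0 : Fin.t n -> R),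
  (forall j, 0 <= a0 j) -> forall eps, 0 < eps -> exists delta, 0 < delta /\
  forall a : Fin.t n -> R, (forall j, 0 <= a j) -> (forall j, Rabs (a j - a0 j) < delta) ->
  Rabs (sumFin n (fun j => lam j * rpow (a j) p) - sumFin n (fun j => lam j * rpow (a0 j) p)) < eps.
Proof.
  intros Hp n. induction n; intros lam a0 Ha0 eps He.
  - exists 1. split. lra. intros. simpl. rewrite Rminus_diag, Rabs_R0. auto.
  - set (c := Rabs (lam Fin.F1) + 1).
    assert (Hc : 0 < c) by (unfold c; pose proof (Rabs_pos (lam Fin.F1)); lra).
    destruct (rpow_cont p Hp (a0 Fin.F1) (Ha0 _) (eps / 2 / c)) as [d1 [Hd1 H1]].
    { apply Rdiv_lt_0_compat; lra. }
    destruct (IHn (fun i => lam (Fin.FS i)) (fun i => a0 (Fin.FS i)) (fun i => Ha0 _) (eps/2)) as [d2 [Hd2 H2]].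
    lra.
    exists (Rmin d1 d2). split. apply Rmin_glb_lt; lra.
    intros a Ha Hd. simpl.
    pose proof (Rmin_l d1 d2); pose proof (Rmin_r d1 d2).
    specialize (H2 (fun i => a (Fin.FS i)) (fun i => Ha _) (fun i => Rlt_le_trans _ _ _ (Hd _) H0)).
    specialize (H1 (a Fin.F1) (Ha _) (Rlt_le_trans _ _ _ (Hd _) H)).
    simpl in H2.
    set (S1 := sumFin n (fun i => lam (Fin.FS i) * rpow (a (Fin.FS i)) p)) in *.
    set (S2 := sumFin n (fun i => lam (Fin.FS i) * rpow (a0 (Fin.FS i)) p)) in *.
    replace (lam Fin.F1 * rpow (a Fin.F1) p + S1 - (lam Fin.F1 * rpow (a0 Fin.F1) p + S2))
      with (lam Fin.F1 * (rpow (a Fin.F1) p - rpow (a0 Fin.F1) p) + (S1 - S2)) by ring.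
    eapply Rle_lt_trans. apply Rabs_triang.
    rewrite Rabs_mult.
    assert (Rabs (lam Fin.F1) * Rabs (rpow (a Fin.F1) p - rpow (a0 Fin.F1) p) <= eps / 2).
    { apply Rle_trans with (c * (eps / 2 / c)).
      apply Rmult_le_compat; try apply Rabs_pos. unfold c; lra. lra.
      right; field; lra. }
    lra.
Qed.

Lemma le_eps (a b : R) : (forall eps, 0 < eps -> a <= b + eps) -> a <= b.
Proof.
  intros H. destruct (Rle_lt_dec a b); auto.
  specialize (H ((a - b)/2) ltac:(lra)). lra.
Qed.

Section Metric.
Context {E : Type} (d : E -> E -> R).
Hypothesis Hm : is_metric d.

Lemma d_pos x y : 0 <= d x y. Proof. apply (proj1 Hm). Qed.
Lemma d_sym x y : d x y = d y x. Proof. apply (proj1 (proj2 (proj2 Hm))). Qed.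
Lemma d_tri x y z : d x z <= d x y + d y z. Proof. apply (proj2 (proj2 (proj2 Hm))). Qed.
Lemma d_refl x : d x x = 0. Proof. apply (proj1 (proj2 Hm)). auto. Qed.
Lemma d_eq x y : d x y = 0 -> x = y. Proof. apply (proj1 (proj2 Hm)). Qed.

Lemma d_rev y y0 a : Rabs (d y a - d y0 a) <= d y y0.
Proof.
  pose proof (d_tri y y0 a). pose proof (d_tri y0 y a). rewrite (d_sym y0 y) in H0.
  apply Rabs_le; lra.
Qed.

Lemma d_rev2 y a a0 : Rabs (d y a - d y a0) <= d a a0.
Proof.
  pose proof (d_tri y a0 a). pose proof (d_tri y a a0). rewrite (d_sym a0 a) in H.
  apply Rabs_le; lra.
Qed.

Definition closed (A : E -> Prop) := is_open d (fun y => ~ A y).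
Definition cball (x : E) (r : R) := fun y => d x y <= r.

Lemma cball_closed x r : closed (cball x r).
Proof.
  intros y Hy. unfold cball in Hy. exists (d x y - r). split. lra.
  intros z Hz Hc. unfold cball in Hc. pose proof (d_tri x z y). rewrite (d_sym z y) in H. lra.
Qed.

Lemma ball_open x r : is_open d (fun y => d x y < r).
Proof.
  intros y Hy. exists (r - d x y). split. lra. intros z Hz. pose proof (d_tri x y z). lra.
Qed.

Lemma compact_sub_closed K A : Defs.compact d K -> closed A -> (forall y, A y -> K y) -> Defs.compact d A.
Proof.
  intros HK HA HAK I U HU Hcov.
  destruct (HK (option I) (fun o => match o with Some i => U i | None => fun y => ~ A y end))
    as [l Hl].
  - intros [i|]; auto.
  - intros x Kx. destruct (classic (A x)) as [Ax|nAx].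
    + destruct (Hcov x Ax) as [i Hi]. exists (Some i); auto.
    + exists None; auto.
  - exists (flat_map (fun o => match o with Some i => i :: nil | None => nil end) l).
    intros x Ax. destruct (Hl x (HAK x Ax)) as [[i|] [Hin Hi]].
    + exists i. split; auto. apply in_flat_map. exists (Some i). simpl; auto.
    + contradiction.
Qed.

Lemma compact_empty : Defs.compact d (fun _ => False).
Proof. intros I U _ _. exists nil. intros x []. Qed.

Lemma compact_union A B : Defs.compact d A -> Defs.compact d B -> Defs.compact d (fun y => A y \/ B y).
Proof.
  intros HA HB I U HU Hcov.
  destruct (HA I U HU) as [l1 H1]. { intros x Ax; apply Hcov; auto. }
  destruct (HB I U HU) as [l2 H2]. { intros x Bx; apply Hcov; auto. }
  exists (l1 ++ l2). intros x [Ax|Bx].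
  - destruct (H1 x Ax) as [i [Hi Ui]]. exists i; split; auto. apply in_or_app; auto.
  - destruct (H2 x Bx) as [i [Hi Ui]]. exists i; split; auto. apply in_or_app; auto.
Qed.

Lemma compact_union_list (K : E -> E -> Prop) (l : list E) :
  (forall y, In y l -> Defs.compact d (K y)) -> Defs.compact d (fun z => exists y, In y l /\ K y z).
Proof.
  induction l as [|a l IH]; intros Hl.
  - intros I U HU Hc. exists nil. intros x [y [[] _]].
  - assert (C : Defs.compact d (fun z => K a z \/ exists y, In y l /\ K y z)).
    { apply compact_union. apply Hl; simpl; auto. apply IH. intros; apply Hl; simpl; auto. }
    intros I U HU Hc. destruct (C I U HU) as [l' Hl'].
    { intros x [Kx|[y [Hy Kx]]]; apply Hc. exists a; simpl; auto. exists y; simpl; auto. }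
    exists l'. intros x [y [[Hy|Hy] Kx]]; apply Hl'; [left; subst; auto | right; eauto].
Qed.

Hypothesis Hcomp : Defs.complete d.

Lemma geo_conv (u : nat -> E) C : 0 <= C -> (forall n, d (u n) (u (S n)) <= C * rr n) ->
  exists l, forall n, d (u n) l <= 2 * C * rr n.
Proof.
  intros HC Hu.
  assert (Hk : forall k n, d (u n) (u (n + k)%nat) <= 2 * C * (rr n - rr (n + k))).
  { induction k; intros n. rewrite Nat.add_0_r, d_refl. lra.
    rewrite Nat.add_succ_r. eapply Rle_trans. apply d_tri with (y := u (n + k)%nat).
    pose proof (IHk n). pose proof (Hu (n + k)%nat). rewrite rr_S. lra. }
  assert (Hb : forall n m, (n <= m)%nat -> d (u n) (u m) <= 2 * C * rr n).
  { intros n m Hnm. replace m with (n + (m - n))%nat by lia.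
    pose proof (Hk (m - n)%nat n). pose proof (rr_pos (n + (m - n))). nra. }
  destruct (Hcomp u) as [l Hl].
  - intros eps He. destruct (rr_small (eps / (4 * C + 1))) as [N HN].
    { apply Rdiv_lt_0_compat; lra. }
    exists N. intros m n Hm1 Hn1.
    pose proof (Hb N m Hm1); pose proof (Hb N n Hn1).
    pose proof (d_tri (u m) (u N) (u n)). rewrite (d_sym (u m) (u N)) in H1.
    assert (rr N * (4 * C + 1) < eps).
    { apply Rmult_lt_compat_r with (r := 4 * C + 1) in HN; [|lra].
      unfold Rdiv in HN. rewrite Rmult_assoc, Rinv_l in HN; lra. }
    pose proof (rr_pos N). nra.
  - exists l. intros n. apply le_eps. intros eps He.
    destruct (Hl eps He) as [N HN].
    pose proof (HN (max n N) ltac:(lia)). pose proof (Hb n (max n N) ltac:(lia)).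
    pose proof (d_tri (u n) (u (max n N)) l). lra.
Qed.


Hypothesis Hmid : forall x y, exists z, d x z = d x y / 2 /\ d z y = d x y / 2.

Lemma geo_approx_n n : forall x y s, 0 <= s <= d x y ->
  exists z, d x z <= s /\ d z y <= d x y - s + d x y * rr n.
Proof.
  induction n; intros x y s Hs.
  - exists x. rewrite d_refl. unfold rr; simpl. rewrite Rinv_1. lra.
  - destruct (Hmid x y) as [m [H1 H2]].
    destruct (Rle_lt_dec s (d x y / 2)).
    + destruct (IHn x m s ltac:(lra)) as [z [Hz1 Hz2]].
      exists z. split; auto. pose proof (d_tri z m y). rewrite rr_S.
      rewrite H1 in Hz2. lra.
    + destruct (IHn m y (s - d x y / 2) ltac:(lra)) as [z [Hz1 Hz2]].
      exists z. pose proof (d_tri x m z). rewrite rr_S. rewrite H2 in Hz2. split; lra.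
Qed.

Lemma geo_approx x y s eps : 0 <= s <= d x y -> 0 < eps ->
  exists z, d x z <= s /\ d z y <= d x y - s + eps.
Proof.
  intros Hs He. pose proof (d_pos x y).
  destruct (rr_small (eps / (d x y + 1))) as [n Hn]. apply Rdiv_lt_0_compat; lra.
  destruct (geo_approx_n n x y s Hs) as [z [Hz1 Hz2]]. exists z. split; auto.
  assert (d x y * rr n <= eps).
  { apply Rmult_lt_compat_l with (r := d x y + 1) in Hn; [|lra].
    unfold Rdiv in Hn. rewrite (Rmult_comm eps), <- Rmult_assoc, Rinv_r in Hn by lra.
    pose proof (rr_pos n). nra. }
  lra.
Qed.

Section Cover.
Variable (I : Type) (U : I -> E -> Prop).
Definition FC (S : E -> Prop) := exists l : list I, forall y, S y -> exists i, In i l /\ U i y.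

Lemma FC_list (S : E -> Prop) (T : E -> E -> Prop) (L : list E) :
  (forall c, In c L -> FC (fun y => S y /\ T c y)) -> FC (fun y => S y /\ exists c, In c L /\ T c y).
Proof.
  induction L as [|a L IH]; intros H.
  - exists nil. intros y [_ [c [[] _]]].
  - destruct (H a (or_introl eq_refl)) as [l1 H1].
    destruct IH as [l2 H2]. { intros c Hc; apply H; simpl; auto. }
    exists (l1 ++ l2). intros y [Sy [c [[Hc|Hc] Tc]]].
    + subst. destruct (H1 y (conj Sy Tc)) as [i [Hi Ui]]. exists i; split; auto; apply in_or_app; auto.
    + destruct (H2 y (conj Sy (ex_intro _ c (conj Hc Tc)))) as [i [Hi Ui]].
      exists i; split; auto; apply in_or_app; auto.
Qed.

Lemma NFC_split (S : E -> Prop) (T : E -> E -> Prop) (L : list E) :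
  ~ FC S -> (forall y, S y -> exists c, In c L /\ T c y) ->
  exists c, In c L /\ ~ FC (fun y => S y /\ T c y).
Proof.
  intros NS Hcov. apply NNPP; intro Hn. apply NS.
  destruct (FC_list S T L) as [l Hl].
  { intros c Hc. apply NNPP; intro Hf. apply Hn; eauto. }
  exists l. intros y Sy. apply Hl. split; auto.
Qed.

Lemma NFC_nonempty S : ~ FC S -> exists y, S y.
Proof. intros H. apply NNPP; intro Hn. apply H. exists nil. intros y Sy; exfalso; eauto. Qed.

Lemma NFC_mono (S S' : E -> Prop) : ~ FC S -> (forall y, S y -> S' y) -> ~ FC S'.
Proof. intros H Hs [l Hl]. apply H. exists l. intros y Sy; apply Hl; auto. Qed.
End Cover.

Lemma tb_compact A : closed A ->
  (forall eps, 0 < eps -> exists l : list E, forall y, A y -> exists c, In c l /\ d c y < eps) ->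
  Defs.compact d A.
Proof.
  intros HA Htb I U HU Hcov. apply NNPP; intro NF.
  set (Good := fun k c => ~ FC I U (fun y => A y /\ d c y < rr k)).
  assert (Hstep : forall k c, Good k c -> exists c', Good (S k) c' /\ d c c' <= 2 * rr k).
  { intros k c Gc. destruct (Htb (rr (S k)) (rr_pos _)) as [L HL].
    destruct (NFC_split I U (fun y => A y /\ d c y < rr k) (fun c' y => d c' y < rr (S k)) L Gc)
      as [c' [Hc' Nc']].
    { intros y [Ay _]. auto. }
    exists c'. split.
    - eapply NFC_mono. apply Nc'. intros y [[Ay _] H]. split; auto.
    - destruct (NFC_nonempty _ _ _ Nc') as [y [[_ H1] H2]].
      pose proof (d_tri c y c'). rewrite (d_sym y c') in H. rewrite rr_S in H2. pose proof (rr_pos k). lra. }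
  assert (H0 : exists c, Good 0%nat c).
  { destruct (Htb (rr 0) (rr_pos _)) as [L HL].
    destruct (NFC_split I U A (fun c y => d c y < rr 0) L NF HL) as [c [_ Nc]].
    exists c. exact Nc. }
  destruct (constructive_indefinite_description _ H0) as [c0 Hc0].
  set (step := fun k c => match excluded_middle_informative
                  (exists c', Good (S k) c' /\ d c c' <= 2 * rr k) with
               | left h => proj1_sig (constructive_indefinite_description _ h)
               | right _ => c end).
  assert (Hstep' : forall k c, Good k c -> Good (S k) (step k c) /\ d c (step k c) <= 2 * rr k).
  { intros k c Gc. unfold step. destruct excluded_middle_informative as [h|h].
    - destruct (constructive_indefinite_description _ h) as [c' Hc']. simpl. auto.
    - exfalso; apply h; auto. }
  set (u := fix u n := match n with O => c0 | S k => step k (u k) end).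
  assert (Hu : forall n, Good n (u n) /\ d (u n) (u (S n)) <= 2 * rr n).
  { induction n. split; [exact Hc0 | apply Hstep'; exact Hc0].
    assert (G : Good (S n) (u (S n))) by (apply (Hstep' n (u n)), IHn).
    split. exact G. apply (Hstep' (S n) (u (S n)) G). }
  destruct (geo_conv u 2 ltac:(lra) (fun n => proj2 (Hu n))) as [l Hl].
  assert (Hlr : forall rho, 0 < rho -> exists n, forall y, d (u n) y < rr n -> d l y < rho).
  { intros rho Hr. destruct (rr_small (rho / 5)) as [n Hn]. lra.
    exists n. intros y Hy. pose proof (Hl n). pose proof (d_tri l (u n) y) as T. rewrite (d_sym l (u n)) in T.
    lra. }
  assert (Al : A l).
  { apply NNPP; intro nA. destruct (HA l nA) as [rho [Hr Hb]].
    destruct (Hlr rho Hr) as [n Hn].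
    destruct (NFC_nonempty _ _ _ (proj1 (Hu n))) as [y [Ay Hy]].
    apply (Hb y); auto. }
  destruct (Hcov l Al) as [i Ui]. destruct (HU i l Ui) as [rho [Hr Hb]].
  destruct (Hlr rho Hr) as [n Hn].
  apply (proj1 (Hu n)). exists (i :: nil). intros y [Ay Hy]. exists i. simpl; auto.
Qed.


Lemma compact_net K eps : Defs.compact d K -> 0 < eps ->
  exists l, forall y, K y -> exists c, In c l /\ d c y < eps.
Proof.
  intros HK He. destruct (HK E (fun c y => d c y < eps)) as [l Hl].
  - intros c; apply ball_open.
  - intros y _. exists y. rewrite d_refl; auto.
  - exists l. exact Hl.
Qed.

Lemma compact_mono x r r' : Defs.compact d (cball x r') -> r <= r' -> Defs.compact d (cball x r).
Proof.
  intros H Hr. apply compact_sub_closed with (cball x r'); auto. apply cball_closed.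
  unfold cball; intros; lra.
Qed.

Hypothesis Hlc : locally_compact d.

Lemma P_small x : exists rho, 0 < rho /\ Defs.compact d (cball x rho).
Proof.
  destruct (Hlc x) as [K [HK [r [Hr Hb]]]]. exists (r / 2). split. lra.
  apply compact_sub_closed with K; auto. apply cball_closed.
  intros y Hy. apply Hb. unfold cball in Hy. lra.
Qed.

Lemma stepB x R : 0 < R -> (forall r, r < R -> Defs.compact d (cball x r)) ->
  Defs.compact d (cball x R).
Proof.
  intros HR HP. apply tb_compact. apply cball_closed.
  intros eps He. set (eta := Rmin (eps / 4) (R / 2)).
  assert (eta <= eps / 4) by apply Rmin_l. assert (eta <= R / 2) by apply Rmin_r.
  assert (0 < eta) by (apply Rmin_glb_lt; lra).
  destruct (compact_net (cball x (R - eta)) (eps / 4) (HP (R - eta) ltac:(lra)) ltac:(lra)) as [L HL].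
  exists L. intros y Hy. unfold cball in Hy.
  destruct (Rle_lt_dec (d x y) (R - eta)).
  - destruct (HL y r) as [c [Hc Hd]]. exists c; split; auto; lra.
  - destruct (geo_approx x y (R - eta) (eps / 4) ltac:(lra) ltac:(lra)) as [z [Hz1 Hz2]].
    destruct (HL z Hz1) as [c [Hc Hd]]. exists c; split; auto.
    pose proof (d_tri c z y). lra.
Qed.

Lemma stepC x Rr : 0 <= Rr -> Defs.compact d (cball x Rr) ->
  exists delta, 0 < delta /\ Defs.compact d (cball x (Rr + delta)).
Proof.
  intros HR HK.
  assert (LC : forall y, {K : E -> Prop & {rho : R | Defs.compact d K /\ 0 < rho /\
                 forall z, d y z < rho -> K z}}).
  { intros y. destruct (constructive_indefinite_description _ (Hlc y)) as [K HK'].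
    exists K. destruct HK' as [HK1 HK2].
    destruct (constructive_indefinite_description _ HK2) as [rho Hr]. exists rho. tauto. }
  set (Kf := fun y => projT1 (LC y)).
  set (rho := fun y => proj1_sig (projT2 (LC y))).
  assert (Hrho : forall y, Defs.compact d (Kf y) /\ 0 < rho y /\ forall z, d y z < rho y -> Kf y z).
  { intros y. unfold Kf, rho. destruct (LC y) as [K [r Hr]]. simpl. exact Hr. }
  destruct (HK E (fun y z => d y z < rho y / 2)) as [l Hl].
  - intros y; apply ball_open.
  - intros y _. exists y. rewrite d_refl. pose proof (proj1 (proj2 (Hrho y))). lra.
  - set (d0 := fold_right (fun y acc => Rmin (rho y / 2) acc) 1 l).
    assert (Hd0 : 0 < d0 /\ forall y, In y l -> d0 <= rho y / 2).
    { unfold d0; clear Hl. induction l as [|a l IH]; simpl.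
      - split. lra. intros y [].
      - destruct IH as [IH1 IH2]. pose proof (proj1 (proj2 (Hrho a))). split.
        apply Rmin_glb_lt; lra.
        intros y [Hy|Hy]. subst; apply Rmin_l.
        eapply Rle_trans. apply Rmin_r. auto. }
    destruct Hd0 as [Hd0 Hd0'].
    exists (d0 / 2). split. lra.
    apply compact_sub_closed with (fun z => exists y, In y l /\ Kf y z).
    + apply compact_union_list. intros; apply Hrho.
    + apply cball_closed.
    + intros z Hz. unfold cball in Hz.
      assert (Hw : exists w, d x w <= Rr /\ d w z < d0).
      { destruct (Rle_lt_dec (d x z) Rr).
        - exists z. rewrite d_refl. auto.
        - destruct (geo_approx x z Rr (d0 / 4) ltac:(lra) ltac:(lra)) as [w [Hw1 Hw2]].
          exists w. split; auto. lra. }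
      destruct Hw as [w [Hw1 Hw2]].
      destruct (Hl w Hw1) as [y [Hy Hyw]]. exists y. split; auto.
      apply Hrho. pose proof (d_tri y w z). pose proof (Hd0' y Hy). lra.
Qed.

Theorem proper x r : Defs.compact d (cball x r).
Proof.
  revert r. apply NNPP; intro Hn. apply not_all_ex_not in Hn. destruct Hn as [r0 Hr0].
  set (S := fun r => Defs.compact d (cball x r)).
  assert (Hb : forall r, S r -> r <= r0).
  { intros r Sr. destruct (Rle_lt_dec r r0); auto. exfalso; apply Hr0.
    apply compact_mono with r; auto. lra. }
  destruct (P_small x) as [rho0 [Hrho0 Hc0]].
  destruct (completeness S) as [R [HR1 HR2]].
  { exists r0. intros r Sr; auto. }
  { exists rho0; auto. }
  assert (Rpos : 0 < R) by (pose proof (HR1 rho0 Hc0); lra).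
  assert (Hlt : forall r, r < R -> S r).
  { intros r Hr. apply NNPP; intro nS.
    assert (R <= r).
    { apply HR2. intros r' Sr'. destruct (Rle_lt_dec r' r); auto.
      exfalso; apply nS. apply compact_mono with r'; auto. lra. }
    lra. }
  assert (SR : S R) by (apply stepB; auto).
  destruct (stepC x R ltac:(lra) SR) as [delta [Hd Hc]].
  pose proof (HR1 _ Hc). lra.
Qed.

End Metric.

Section BorelH.
Context {X : Type} (op : (X -> Prop) -> Prop).
Hypothesis Hfull : op (fun _ => True).

Lemma borel_full : borel op (fun _ => True).
Proof. apply borel_open; auto. Qed.

Lemma borel_empty : borel op (fun _ => False).
Proof. apply borel_ext with (fun x => ~ True). apply borel_compl, borel_full. tauto. Qed.

Lemma borel_union2 A B : borel op A -> borel op B -> borel op (fun x => A x \/ B x).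
Proof.
  intros HA HB. apply borel_ext with (fun x => exists n : nat, (match n with O => A | _ => B end) x).
  apply borel_cunion. intros [|n]; auto.
  intros x; split. intros [[|n] H]; auto. intros [H|H]. exists O; auto. exists 1%nat; auto.
Qed.

Lemma borel_forall (A : nat -> X -> Prop) : (forall n, borel op (A n)) -> borel op (fun x => forall n, A n x).
Proof.
  intros H. apply borel_ext with (fun x => ~ exists n, ~ A n x).
  apply borel_compl, borel_cunion. intros n; apply borel_compl; auto.
  intros x; split. intros Hn n. apply NNPP; intro; apply Hn; eauto.
  intros Hn [n Hn']; auto.
Qed.

Lemma borel_and A B : borel op A -> borel op B -> borel op (fun x => A x /\ B x).
Proof.
  intros HA HB. apply borel_ext with (fun x => ~ (~ A x \/ ~ B x)).
  apply borel_compl, borel_union2; apply borel_compl; auto.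
  intros x; tauto.
Qed.

Lemma borel_const_and (P : Prop) B : borel op B -> borel op (fun x => P /\ B x).
Proof.
  intros HB. destruct (classic P).
  - apply borel_ext with B; auto. tauto.
  - apply borel_ext with (fun _ => False). apply borel_empty. tauto.
Qed.

Lemma borel_const_imp (P : Prop) B : borel op B -> borel op (fun x => P -> B x).
Proof.
  intros HB. destruct (classic P).
  - apply borel_ext with B; auto. tauto.
  - apply borel_ext with (fun _ => True). apply borel_full. tauto.
Qed.

Lemma borel_ex (A : nat -> X -> Prop) : (forall n, borel op (A n)) -> borel op (fun x => exists n, A n x).
Proof. apply borel_cunion. Qed.
End BorelH.

Lemma wo_nat (P : nat -> Prop) : (exists n, P n) -> exists n, P n /\ forall m, (m < n)%nat -> ~ P m.
Proof.
  intros [n Hn]. revert Hn. induction n as [n IH] using lt_wf_ind. intros Pn.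
  destruct (classic (exists m, (m < n)%nat /\ P m)) as [[m [Hm Pm]]|Hno].
  - apply (IH m Hm Pm).
  - exists n. split; auto. intros m Hm Pm. apply Hno; eauto.
Qed.

Definition least (P : nat -> Prop) : nat :=
  match excluded_middle_informative (exists n, P n) with
  | left h => proj1_sig (constructive_indefinite_description _ (wo_nat P h))
  | right _ => O end.

Lemma least_spec P : (exists n, P n) -> P (least P) /\ forall m, (m < least P)%nat -> ~ P m.
Proof.
  intros h. unfold least. destruct excluded_middle_informative as [h'|h']; [|contradiction].
  destruct (constructive_indefinite_description _ (wo_nat P h')) as [n Hn]. exact Hn.
Qed.

Lemma least_eq P k : (exists n, P n) -> (least P = k <-> (P k /\ forall m, (m < k)%nat -> ~ P m)).
Proof.
  intros h. destruct (least_spec P h) as [H1 H2]. split.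
  - intros <-. auto.
  - intros [Pk Hk]. destruct (Nat.lt_trichotomy (least P) k) as [Hl|[Hl|Hl]]; auto.
    + exfalso; apply (Hk _ Hl H1).
    + exfalso; apply (H2 _ Hl Pk).
Qed.

Section Main.
Context {E : Type} (d : E -> E -> R).
Hypothesis Hm : is_metric d.
Hypothesis Hcomp : Defs.complete d.
Hypothesis Hmid : forall x y, exists z, d x z = d x y / 2 /\ d z y = d x y / 2.
Hypothesis Hlc : locally_compact d.
Variable p : R.
Hypothesis Hp : 1 <= p.
Variable J : nat.
Variable lam : Fin.t J -> R.
Hypothesis Hlam : forall j, 0 <= lam j.
Hypothesis Hsum : sumFin J lam = 1.

Definition X := Fin.t J -> E.
Definition F (xs : X) (y : E) := barycost d p J lam xs y.

Lemma F_ge0 xs y : 0 <= F xs y.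
Proof.
  apply sumFin_nonneg. intros j. apply Rmult_le_pos; auto. apply rpow_ge0.
Qed.

Lemma F_cont_y xs y0 eps : 0 < eps -> exists delta, 0 < delta /\
  forall y, d y0 y < delta -> Rabs (F xs y - F xs y0) < eps.
Proof.
  intros He. destruct (sumFin_cont p Hp J lam (fun j => d y0 (xs j)) (fun j => d_pos d Hm _ _) eps He)
    as [del [Hdel H]].
  exists del. split; auto. intros y Hy. apply (H (fun j => d y (xs j))).
  intros; apply d_pos; auto.
  intros j. eapply Rle_lt_trans. apply d_rev; auto. rewrite d_sym; auto.
Qed.

Lemma F_cont_xs y xs0 eps : 0 < eps -> exists delta, 0 < delta /\
  forall xs : X, (forall j, d (xs0 j) (xs j) < delta) -> Rabs (F xs y - F xs0 y) < eps.
Proof.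
  intros He. destruct (sumFin_cont p Hp J lam (fun j => d y (xs0 j)) (fun j => d_pos d Hm _ _) eps He)
    as [del [Hdel H]].
  exists del. split; auto. intros xs Hxs. apply (H (fun j => d y (xs j))).
  intros; apply d_pos; auto.
  intros j. eapply Rle_lt_trans. apply d_rev2; auto. rewrite d_sym; auto.
Qed.

Lemma min_on_compact (K : E -> Prop) (f : E -> R) : Defs.compact d K -> (exists y, K y) ->
  (forall y0 eps, 0 < eps -> exists delta, 0 < delta /\ forall y, d y0 y < delta -> Rabs (f y - f y0) < eps) ->
  exists y, K y /\ forall z, K z -> f y <= f z.
Proof.
  intros HK [y0 Ky0] Hf. apply NNPP; intro Hno.
  assert (Hlow : forall y, K y -> exists z, K z /\ f z < f y).
  { intros y Ky. apply NNPP; intro Hn. apply Hno. exists y. split; auto.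
    intros z Kz. destruct (Rle_lt_dec (f y) (f z)); auto. exfalso; apply Hn; eauto. }
  destruct (HK {c | K c} (fun c y => f (proj1_sig c) < f y)) as [l Hl].
  - intros [c Kc] y Hy. simpl in Hy.
    destruct (Hf y (f y - f c) ltac:(lra)) as [del [Hdel Hd]].
    exists del. split; auto. intros z Hz. specialize (Hd z Hz). apply Rabs_def2 in Hd. simpl. lra.
  - intros y Ky. destruct (Hlow y Ky) as [z [Kz Hz]]. exists (exist _ z Kz). auto.
  - assert (Hmin : forall l : list {c | K c}, l <> nil -> exists a, In a l /\
              forall b, In b l -> f (proj1_sig a) <= f (proj1_sig b)).
    { induction l0 as [|a l0 IH]; intros Hne. congruence.
      destruct l0 as [|b l0].
      - exists a. split. simpl; auto. intros b [Hb|[]]; subst; lra.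
      - destruct (IH ltac:(discriminate)) as [m [Hmi Hmm]].
        destruct (Rle_lt_dec (f (proj1_sig a)) (f (proj1_sig m))).
        + exists a. split. simpl; auto. intros c [Hc|Hc]. subst; lra. specialize (Hmm c Hc); lra.
        + exists m. split. simpl; auto. intros c [Hc|Hc]. subst; lra. auto. }
    destruct l as [|a l].
    + destruct (Hl y0 Ky0) as [i [[] _]].
    + destruct (Hmin (a :: l) ltac:(discriminate)) as [m [Hmi Hmm]].
      destruct (Hl (proj1_sig m) (proj2_sig m)) as [i [Hi Hfi]].
      specialize (Hmm i Hi). lra.
Qed.

Definition minimizer xs y := forall z, F xs y <= F xs z.

Lemma exists_min xs : exists y, minimizer xs y.
Proof.
  destruct (sumFin_pos_exists J lam Hlam Hsum) as [j0 Hj0].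
  set (c := F xs (xs j0)).
  set (rho := Rmax 1 (c / lam j0 + 1)).
  assert (H1 : 1 <= rho) by apply Rmax_l. assert (H2 : c / lam j0 + 1 <= rho) by apply Rmax_r.
  destruct (min_on_compact (cball d (xs j0) rho) (F xs)) as [y [Ky Hy]].
  - apply proper; auto.
  - exists (xs j0). unfold cball. rewrite d_refl; auto. lra.
  - intros; apply F_cont_y; auto.
  - exists y. intros z. destruct (Rle_lt_dec (d (xs j0) z) rho) as [Hz|Hz].
    + apply Hy; auto.
    + apply Rle_trans with c. apply Hy. unfold cball; rewrite d_refl; auto; lra.
      assert (Ht : lam j0 * rpow (d z (xs j0)) p <= F xs z).
      { unfold F, barycost.
        apply (sumFin_ge_term J (fun j => lam j * rpow (d z (xs j)) p) j0).
        intros; apply Rmult_le_pos; auto; apply rpow_ge0. }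
      rewrite d_sym in Hz; auto.
      pose proof (rpow_ge_self (d z (xs j0)) p Hp ltac:(lra)).
      assert (c / lam j0 * lam j0 = c) by (field; lra).
      assert (lam j0 * (c / lam j0 + 1) <= lam j0 * rpow (d z (xs j0)) p).
      { apply Rmult_le_compat_l; lra. }
      nra.
Qed.

Definition tq (k m : nat) := INR m * rr k.

Lemma tq_dense a b : 0 <= a < b -> exists k m, a < tq k m < b.
Proof.
  intros Hab. destruct (rr_small (b - a)) as [k Hk]. lra.
  pose proof (rr_pos k).
  destruct (archimed (a / rr k)) as [A1 A2].
  assert (Hz : (0 < up (a / rr k))%Z).
  { apply lt_IZR. apply Rle_lt_trans with (a / rr k); auto.
    apply Rmult_le_pos. lra. left; apply Rinv_0_lt_compat; auto. }
  exists k, (Z.to_nat (up (a / rr k))). unfold tq.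
  rewrite INR_IZR_INZ, Z2Nat.id by lia.
  assert (a = a / rr k * rr k) by (field; lra).
  split; nra.
Qed.

Definition HasMin (C : E -> Prop) xs := exists y, C y /\ minimizer xs y.

Lemma hasmin_iff C xs : Defs.compact d C ->
  (HasMin C xs <-> forall k m, (exists z, F xs z < tq k m) -> exists y, C y /\ F xs y < tq k m).
Proof.
  intros HC. split.
  - intros [y [Cy My]] k m [z Hz]. exists y. split; auto. specialize (My z); lra.
  - intros H. destruct (exists_min xs) as [z0 Hz0].
    assert (Cne : exists y, C y).
    { destruct (tq_dense (F xs z0) (F xs z0 + 1)) as [k [m Hkm]].
      split. apply F_ge0. lra.
      destruct (H k m) as [y [Cy _]]. exists z0; lra. eauto. }
    destruct (min_on_compact C (F xs) HC Cne) as [y [Cy Hy]].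
    { intros; apply F_cont_y; auto. }
    exists y. split; auto. intros z. destruct (Rle_lt_dec (F xs y) (F xs z)); auto.
    destruct (tq_dense (F xs z) (F xs y)) as [k [m Hkm]]. split; auto. apply F_ge0.
    destruct (H k m) as [y' [Cy' Hy']]. exists z; lra.
    specialize (Hy y' Cy'). lra.
Qed.

Definition op := is_open_prod d J.

Lemma op_full : op (fun _ => True).
Proof. intros x _. exists 1. split. lra. auto. Qed.

Lemma Ut_open (A : E -> Prop) t : op (fun xs => exists y, A y /\ F xs y < t).
Proof.
  intros xs [y [Ay Hy]]. destruct (F_cont_xs y xs (t - F xs y) ltac:(lra)) as [del [Hdel H]].
  exists del. split; auto. intros xs' Hxs'. exists y. split; auto.
  specialize (H xs' Hxs'). apply Rabs_def2 in H. lra.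
Qed.

Lemma hasmin_borel C : Defs.compact d C -> borel op (HasMin C).
Proof.
  intros HC. apply borel_ext with
    (fun xs => forall k m, ~ (exists z, F xs z < tq k m) \/ exists y, C y /\ F xs y < tq k m).
  - apply borel_forall. intros k. apply borel_forall. intros m.
    apply borel_union2.
    + apply borel_compl. apply borel_ext with (fun xs => exists y, (fun _ => True) y /\ F xs y < tq k m).
      apply borel_open, Ut_open. intros xs; split. intros [y [_ Hy]]; eauto. intros [y Hy]; eauto.
    + apply borel_open, Ut_open.
  - intros xs. rewrite (hasmin_iff C xs HC). split.
    + intros H k m Hz. destruct (H k m); [contradiction|auto].
    + intros H k m. destruct (classic (exists z, F xs z < tq k m)); auto.
Qed.

Definition W c rho xs := exists y, minimizer xs y /\ d c y < rho.

Lemma W_borel c rho : borel op (W c rho).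
Proof.
  apply borel_ext with (fun xs => exists n, HasMin (cball d c (rho - rr n)) xs).
  - apply borel_ex. intros n. apply hasmin_borel. apply proper; auto.
  - intros xs. split.
    + intros [n [y [Cy My]]]. exists y. split; auto. unfold cball in Cy. pose proof (rr_pos n). lra.
    + intros [y [My Hy]]. destruct (rr_small (rho - d c y)) as [n Hn]. lra.
      exists n, y. split; auto. unfold cball. lra.
Qed.


Variable q : nat -> E.
Hypothesis Hq : forall x eps, 0 < eps -> exists n, d x (q n) < eps.

Definition P0 xs k := W (q k) (rr 0) xs.
Definition Pn n c xs k := W (q k) (rr (S n)) xs /\ d (q k) c < rr n.

Fixpoint idx (n : nat) (xs : X) : nat :=
  match n with
  | O => least (P0 xs)
  | S n' => least (Pn n' (q (idx n' xs)) xs)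
  end.

Lemma P0_ex xs : exists k, P0 xs k.
Proof.
  destruct (exists_min xs) as [y My]. destruct (Hq y (rr 0) (rr_pos _)) as [k Hk].
  exists k, y. split; auto. rewrite d_sym; auto.
Qed.

Lemma Pn_ex n xs : W (q (idx n xs)) (rr n) xs -> exists k, Pn n (q (idx n xs)) xs k.
Proof.
  intros [y [My Hy]]. set (c := q (idx n xs)) in *.
  destruct (Hq y (Rmin (rr (S n)) (rr n - d c y))) as [k Hk].
  { apply Rmin_glb_lt. apply rr_pos. lra. }
  pose proof (Rmin_l (rr (S n)) (rr n - d c y)). pose proof (Rmin_r (rr (S n)) (rr n - d c y)).
  exists k. split.
  - exists y. split; auto. rewrite d_sym; auto. lra.
  - pose proof (d_tri d Hm (q k) y c). rewrite (d_sym d Hm (q k) y), (d_sym d Hm y c) in H1. lra.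
Qed.

Lemma idx_inv n xs : W (q (idx n xs)) (rr n) xs.
Proof.
  induction n.
  - simpl. apply (least_spec (P0 xs) (P0_ex xs)).
  - simpl. apply (least_spec _ (Pn_ex n xs IHn)).
Qed.

Lemma idx_step n xs : d (q (idx n xs)) (q (idx (S n) xs)) <= 1 * rr n.
Proof.
  simpl. destruct (least_spec _ (Pn_ex n xs (idx_inv n xs))) as [[_ H] _].
  rewrite d_sym; auto. lra.
Qed.

Lemma idx_borel n : forall k, borel op (fun xs => idx n xs = k).
Proof.
  induction n; intros k.
  - apply borel_ext with (fun xs => P0 xs k /\ forall m, (m < k)%nat -> ~ P0 xs m).
    + apply borel_and. apply W_borel.
      apply borel_forall. intros m. apply (borel_const_imp op op_full). apply borel_compl, W_borel.
    + intros xs. simpl. rewrite (least_eq _ k (P0_ex xs)). tauto.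
  - apply borel_ext with (fun xs => exists i, idx n xs = i /\
        (Pn n (q i) xs k /\ forall m, (m < k)%nat -> ~ Pn n (q i) xs m)).
    + apply borel_ex. intros i. apply borel_and. apply IHn.
      apply borel_and.
      * unfold Pn. apply borel_ext with (fun xs => d (q k) (q i) < rr n /\ W (q k) (rr (S n)) xs).
        apply (borel_const_and op op_full). apply W_borel. intros; tauto.
      * apply borel_forall. intros m. apply (borel_const_imp op op_full). apply borel_compl.
        unfold Pn. apply borel_ext with (fun xs => d (q m) (q i) < rr n /\ W (q m) (rr (S n)) xs).
        apply (borel_const_and op op_full). apply W_borel. intros; tauto.
    + intros xs. simpl. rewrite (least_eq _ k (Pn_ex n xs (idx_inv n xs))). split.
      * intros [i [<- H]]. exact H.
      * intros H. exists (idx n xs). auto.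
Qed.

Lemma fn_borel n (A : E -> Prop) : borel op (fun xs => A (q (idx n xs))).
Proof.
  apply borel_ext with (fun xs => exists k, A (q k) /\ idx n xs = k).
  - apply borel_ex. intros k. apply (borel_const_and op op_full). apply idx_borel.
  - intros xs. split. intros [k [H <-]]; auto. intros H; eauto.
Qed.

Lemma limit_ex xs : exists l, forall n, d (q (idx n xs)) l <= 2 * 1 * rr n.
Proof. apply geo_conv; auto. lra. intros n; apply idx_step. Qed.

Definition Tsel (xs : X) : E := proj1_sig (constructive_indefinite_description _ (limit_ex xs)).

Lemma Tsel_spec xs n : d (q (idx n xs)) (Tsel xs) <= 2 * rr n.
Proof.
  unfold Tsel. destruct (constructive_indefinite_description _ (limit_ex xs)) as [l Hl]. simpl.
  specialize (Hl n). lra.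
Qed.

Lemma Tsel_min xs : minimizer xs (Tsel xs).
Proof.
  intros z. apply le_eps. intros eps He.
  destruct (F_cont_y xs (Tsel xs) eps He) as [del [Hdel Hc]].
  destruct (rr_small (del / 3)) as [n Hn]. lra.
  destruct (idx_inv n xs) as [y [My Hy]].
  pose proof (Tsel_spec xs n).
  assert (d (Tsel xs) y < del).
  { pose proof (d_tri d Hm (Tsel xs) (q (idx n xs)) y). rewrite (d_sym d Hm (Tsel xs) (q (idx n xs))) in H0. lra. }
  specialize (Hc y H0). apply Rabs_def2 in Hc. specialize (My z). lra.
Qed.

Lemma Tsel_borel : borel_map op (is_open d) Tsel.
Proof.
  assert (Hopen : forall U, is_open d U -> borel op (fun xs => U (Tsel xs))).
  { intros U HU.
    apply borel_ext with (fun xs => exists n, (fun c => forall z, d c z < 3 * rr n -> U z) (q (idx n xs))).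
    - apply borel_ex. intros n. exact (fn_borel n (fun c => forall z, d c z < 3 * rr n -> U z)).
    - intros xs. split.
      + intros [n Hn]. apply Hn. pose proof (Tsel_spec xs n). pose proof (rr_pos n). lra.
      + intros Ux. destruct (HU _ Ux) as [rho [Hr Hb]].
        destruct (rr_small (rho / 5)) as [n Hn]. lra.
        exists n. intros z Hz. apply Hb. pose proof (Tsel_spec xs n).
        pose proof (d_tri d Hm (Tsel xs) (q (idx n xs)) z).
        rewrite (d_sym d Hm (Tsel xs) (q (idx n xs))) in H0. lra. }
  intros B HB. induction HB.
  - apply Hopen; auto.
  - apply borel_compl; auto.
  - apply borel_cunion; auto.
  - apply borel_ext with (fun x => A (Tsel x)); auto.
Qed.

End Main.

Theorem mainTheorem7 (E : Type) (d : E -> E -> R) (p : R) :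
  1 <= p ->
  geodesic d -> separable d -> locally_compact d ->
  forall (J : nat), (1 <= J)%nat ->
  forall lam : Fin.t J -> R,
    (forall j, 0 <= lam j) -> sumFin J lam = 1 ->
    exists T : (Fin.t J -> E) -> E,
      borel_map (is_open_prod d J) (is_open d) T /\
      forall (xs : Fin.t J -> E) (x : E),
        barycost d p J lam xs (T xs) <= barycost d p J lam xs x.
Proof.
  intros Hp [Hm [Hc Hmid]] [D [[f Hf] Hdense]] Hlc J HJ lam Hlam Hsum.
  destruct (classic (inhabited E)) as [[e0]|Hne].
  - set (q := fun n => match excluded_middle_informative (exists x, D x /\ f x = n) with
                | left h => proj1_sig (constructive_indefinite_description _ h)
                | right _ => e0 end).
    assert (Hq : forall x eps, 0 < eps -> exists n, d x (q n) < eps).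
    { intros x eps He. destruct (Hdense x eps He) as [y [Dy Hy]]. exists (f y).
      unfold q. destruct excluded_middle_informative as [h|h].
      - destruct (constructive_indefinite_description _ h) as [x' [Dx' Hx']]. simpl.
        rewrite (Hf x' y Dx' Dy Hx'). auto.
      - exfalso; apply h; eauto. }
    exists (Tsel d Hm Hc Hmid Hlc p Hp J lam Hlam Hsum q Hq). split.
    + exact (Tsel_borel d Hm Hc Hmid Hlc p Hp J lam Hlam Hsum q Hq).
    + intros xs x. exact (Tsel_min d Hm Hc Hmid Hlc p Hp J lam Hlam Hsum q Hq xs x).
  - destruct J as [|J']. lia.
    exists (fun xs => xs Fin.F1). split.
    + intros B HB. apply borel_ext with (fun _ => True).
      * apply borel_open. intros x _. exists 1. split. lra. auto.
      * intros x. exfalso. apply Hne. exact (inhabits (x Fin.F1)).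
    + intros xs. exfalso. apply Hne. exact (inhabits (xs Fin.F1)).
Qed.
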